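(* Let $(P_n)_{n\ge0}$ be a sequence with $P_n\in\Lambda_n$ satisfying: $P_0$ is a unit of $\Lambda_0=\mathbf{Z}_p$; $\pi_{1/0}(P_1)=uP_0$ for some $u\in\mathbf{Z}_p^\times$; and $\pi_{n+1/n}(P_{n+1})=a\,P_n-\nu_{n-1/n}(P_{n-1})$ for all $n\ge1$, where $a\in p\mathbf{Z}_p$ is fixed. Then for all $n\ge0$, $P_n\neq 0$, $\mu(P_n)=0$ and $\lambda(P_n)=q_n$, where $q_0=q_1=0$ and for $n\ge2$ $$q_n=\begin{cases}p^{n-1}-p^{n-2}+\cdots+p-1 & n \text{ even},\\ p^{n-1}-p^{n-2}+\cdots+p^2-p & n \text{ odd}.\end{cases}$$
   Context: Let $p$ be an odd prime. For $n\ge0$ let $G_n$ be a cyclic group of order $p^n$ with surjections $G_n\to G_{n-1}$, $\Lambda_n=\mathbf{Z}_p[G_n]$, $\widetilde\Lambda_n=\mathbf{F}_p[G_n]$ and $\widetilde I_n$ the augmentation ideal of $\widetilde\Lambda_n$. For nonzero $f\in\Lambda_n$, $\mu(f)$ is the unique integer with $f\in p^{\mu(f)}\Lambda_n\setminus p^{\mu(f)+1}\Lambda_n$, and $\lambda(f)$ is the unique integer such that the reduction mod $p$ of $p^{-\mu(f)}f$ lies in $\widetilde I_n^{\lambda(f)}\setminus\widetilde I_n^{\lambda(f)+1}$. $\pi_{n/n-1}:\Lambda_n\to\Lambda_{n-1}$ is induced by $G_n\to G_{n-1}$, and $\nu_{n-1/n}:\Lambda_{n-1}\to\Lambda_n$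 is the $\mathbf{Z}_p$-linear map with $\nu_{n-1/n}(\sigma)=\sum_{\tau\in G_n,\ \tau\mapsto\sigma}\tau$ for $\sigma\in G_{n-1}$. (In the paper, $P_n=F_n(c_n)$ is the image of Kobayashi's point $c_n$ and $a=a_p$; only the stated properties are used.) *)

(* Defs.v *)
From HB Require Import structures.
From mathcomp Require Import boolp.
From mathcomp Require Import all_boot all_order all_algebra.
Set Implicit Arguments. Unset Strict Implicit. Unset Printing Implicit Defensive.
Import Order.TTheory GRing.Theory Num.Theory.
Local Open Scope ring_scope.

(* The p-adic integers Z_p, as the inverse limit of the rings Z/p^k Z:        *)
(* an element is a coherent sequence (x_k)_k of residues x_k \in [0, p^k)     *)
(* with x_k = x_{k+1} mod p^k.  As for 'Z_p in mathcomp, the modulus used is  *)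
(* maxn p 2 (so that the construction is a nontrivial ring for every p); for  *)
(* a prime p this is p itself.                                               *)

Definition zpm (p : nat) : nat := maxn p 2.

Definition zp_coh (p : nat) (x : nat -> int) : Prop :=
  forall k, x k = modz (x k.+1) (zpm p ^ k)%:Z.

Record Zpadic (p : nat) := ZpMk { zp_val :> nat -> int ; zp_cohP : zp_coh p zp_val }.
Arguments ZpMk {p}.

HB.instance Definition _ p := gen_eqMixin (Zpadic p).
HB.instance Definition _ p := gen_choiceMixin (Zpadic p).

Section ZpRing.
Variable p : nat.
Local Notation M k := ((zpm p ^ k)%:Z).

Lemma zpm_gt1 : (1 < zpm p)%N.
Proof. by rewrite /zpm leq_max leqnn orbT. Qed.

Lemma M_neq0 k : M k != 0.
Proof. rewrite eqz_nat expn_eq0 negb_and; have := zpm_gt1; by case: (zpm p). Qed.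

Lemma modz_modS (x : int) k : modz (modz x (M k.+1)) (M k) = modz x (M k).
Proof.
have E : M k.+1 = (zpm p)%:Z * M k by rewrite expnS PoszM.
by rewrite [in RHS](intdiv.divz_eq x (M k.+1)) E mulrA modzMDl.
Qed.

Lemma zp_ext (x y : Zpadic p) : (forall k, x k = y k) -> x = y.
Proof.
case: x y => [x hx] [y hy] /= e.
have exy : x = y by apply: functional_extensionality_dep.
subst y; congr ZpMk; exact: Prop_irrelevance.
Qed.

Program Definition zp_of (f : nat -> int)
  (hf : forall k, modz (f k.+1) (M k) = modz (f k) (M k)) : Zpadic p :=
  @ZpMk p (fun k => modz (f k) (M k)) _.
Next Obligation. by move=> k; rewrite modz_modS hf. Qed.

Definition zp_zero : Zpadic p := @zp_of (fun _ => 0) (fun _ => erefl).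
Definition zp_one : Zpadic p := @zp_of (fun _ => 1) (fun _ => erefl).

Lemma zp_valE (x : Zpadic p) k : x k = modz (x k) (M k).
Proof. by rewrite (zp_cohP x k) modz_mod. Qed.

Lemma zp_valS (x : Zpadic p) k : modz (x k.+1) (M k) = modz (x k) (M k).
Proof. by rewrite -zp_cohP -zp_valE. Qed.

Program Definition zp_add (x y : Zpadic p) : Zpadic p :=
  @zp_of (fun k => x k + y k) _.
Next Obligation. by rewrite -modzDm !zp_valS modzDm. Qed.

Program Definition zp_opp (x : Zpadic p) : Zpadic p := @zp_of (fun k => - x k) _.
Next Obligation. by rewrite -modzNm zp_valS modzNm. Qed.

Program Definition zp_mul (x y : Zpadic p) : Zpadic p :=
  @zp_of (fun k => x k * y k) _.
Next Obligation. by rewrite -modzMm !zp_valS modzMm. Qed.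

Lemma zp_addA : associative zp_add.
Proof. by move=> x y z; apply: zp_ext => k /=; rewrite modzDml modzDmr addrA. Qed.
Lemma zp_addC : commutative zp_add.
Proof. by move=> x y; apply: zp_ext => k /=; rewrite addrC. Qed.
Lemma zp_add0 : left_id zp_zero zp_add.
Proof. by move=> x; apply: zp_ext => k /=; rewrite mod0z add0r -zp_valE. Qed.
Lemma zp_addN : left_inverse zp_zero zp_opp zp_add.
Proof. by move=> x; apply: zp_ext => k /=; rewrite modzDml addNr. Qed.

HB.instance Definition _ := GRing.isZmodule.Build (Zpadic p) zp_addA zp_addC zp_add0 zp_addN.

Lemma zp_mulA : associative zp_mul.
Proof. by move=> x y z; apply: zp_ext => k /=; rewrite modzMml modzMmr mulrA. Qed.
Lemma zp_mulC : commutative zp_mul.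
Proof. by move=> x y; apply: zp_ext => k /=; rewrite mulrC. Qed.
Lemma zp_mul1 : left_id zp_one zp_mul.
Proof. by move=> x; apply: zp_ext => k /=; rewrite modzMml mul1r -zp_valE. Qed.
Lemma zp_mulDl : left_distributive zp_mul zp_add.
Proof.
by move=> x y z; apply: zp_ext => k /=; rewrite modzMml modzDm mulrDl.
Qed.
Lemma zp_one_neq0 : zp_one != zp_zero.
Proof.
apply/eqP => /(congr1 (fun x : Zpadic p => x 1%N)) /=.
rewrite mod0z expn1 modz_small; first by [].
by rewrite ltz_nat zpm_gt1.
Qed.

HB.instance Definition _ := GRing.Zmodule_isComNzRing.Build (Zpadic p)
  zp_mulA zp_mulC zp_mul1 zp_mulDl zp_one_neq0.

End ZpRing.

(* We fix compatible generators gamma_n of G_n (gamma_n |-> gamma_{n-1}), and *)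
(* identify G_n with 'I_(p^n) via gamma_n^i <-> i; the surjection             *)
(* G_n -> G_{n-1} is then i |-> i mod p^(n-1).  An element of a group ring    *)
(* R[G_n] is the finite function g |-> (coefficient of g).                    *)

Definition Lam (p n : nat) := {ffun 'I_(p ^ n) -> Zpadic p}.

Definition lscale (p n : nat) (c : Zpadic p) (f : Lam p n) : Lam p n :=
  [ffun i => c * f i].

Definition lpi (p n : nat) (f : Lam p n.+1) : Lam p n :=
  [ffun j : 'I_(p ^ n) => \sum_(i : 'I_(p ^ n.+1) | (i %% p ^ n)%N == j) f i].

(* nu_{n/n+1} : Lambda_n -> Lambda_{n+1}, Z_p-linear with
   nu(sigma) = sum of the tau in G_{n+1} mapping to sigma; i.e. the coefficient
   of tau in nu(g) is the coefficient in g of the image of tau. *)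
Definition lnu (p n : nat) (g : Lam p n) : Lam p n.+1 :=
  [ffun i : 'I_(p ^ n.+1) => \sum_(j : 'I_(p ^ n) | (i %% p ^ n)%N == j) g j].

Definition is_mu (p n : nat) (f : Lam p n) (m : nat) : Prop :=
  (exists g : Lam p n, f = lscale (p%:R ^+ m) g) /\
  ~ (exists g : Lam p n, f = lscale (p%:R ^+ m.+1) g).

Definition tLam (p n : nat) := {ffun 'I_(p ^ n) -> 'F_p}.

(* reduction mod p : Lambda_n -> tilde Lambda_n (coefficientwise, via the
   residue of a p-adic integer modulo p) *)
Definition lred (p n : nat) (f : Lam p n) : tLam p n :=
  [ffun i => ((f i : Zpadic p) 1%N)%:~R].

Definition tmul (p n : nat) (f g : tLam p n) : tLam p n :=
  [ffun i : 'I_(p ^ n) =>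
     \sum_(j : 'I_(p ^ n)) \sum_(k : 'I_(p ^ n) | ((j + k) %% p ^ n)%N == i)
        f j * g k].

Definition in_aug (p n : nat) (f : tLam p n) : Prop := \sum_i f i = 0.

Fixpoint in_augpow (p n : nat) (k : nat) (f : tLam p n) : Prop :=
  match k with
  | 0 => True
  | k'.+1 => exists (m : nat) (xs ys : 'I_m -> tLam p n),
      (forall i, in_aug (xs i) /\ in_augpow k' (ys i)) /\
      f = \sum_(i < m) tmul (xs i) (ys i)
  end.

Definition is_lambda (p n : nat) (f : Lam p n) (l : nat) : Prop :=
  exists (m : nat) (g : Lam p n),
    is_mu f m /\ f = lscale (p%:R ^+ m) g /\
    in_augpow l (lred g) /\ ~ in_augpow l.+1 (lred g).

Definition qn (p n : nat) : int :=
  if (n < 2)%N then 0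
  else if ~~ odd n then \sum_(0 <= i < n) (-1) ^+ (n.-1 - i) * (p ^ i)%:Z
  else \sum_(1 <= i < n) (-1) ^+ (n.-1 - i) * (p ^ i)%:Z.

(* Main.v *)
Require Import Defs.
From HB Require Import structures.
From mathcomp Require Import boolp.
From mathcomp Require Import all_boot all_order all_algebra.
From mathcomp Require Import zify ring.
Set Implicit Arguments. Unset Strict Implicit. Unset Printing Implicit Defensive.
Import Order.TTheory GRing.Theory Num.Theory.
Local Open Scope ring_scope.




Section Gen.
Variable (F : fieldType).

Definition eqN (N : nat) (a b : {poly F}) := forall j, (j < N)%N -> a`_j = b`_j.

Lemma eqN_refl N a : eqN N a a. Proof. by []. Qed.
Lemma eqN_sym N a b : eqN N a b -> eqN N b a. Proof. by move=> h j hj; rewrite h. Qed.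
Lemma eqN_trans N a b c : eqN N a b -> eqN N b c -> eqN N a c.
Proof. by move=> h1 h2 j hj; rewrite h1 // h2. Qed.

Lemma eqN_mul N a a' b b' : eqN N a a' -> eqN N b b' -> eqN N (a * b) (a' * b').
Proof.
move=> ha hb j hj; rewrite !coefM; apply: eq_bigr => i _.
rewrite ha ?hb //; first by apply: leq_ltn_trans hj; apply: leq_subr.
by apply: leq_ltn_trans hj; rewrite -ltnS.
Qed.

Lemma eqN_add N a a' b b' : eqN N a a' -> eqN N b b' -> eqN N (a + b) (a' + b').
Proof. by move=> ha hb j hj; rewrite !coefD ha ?hb. Qed.

Lemma eqN_scale N c a a' : eqN N a a' -> eqN N (c *: a) (c *: a').
Proof. by move=> ha j hj; rewrite !coefZ ha. Qed.

Lemma eqN_sum N (I : Type) (r : seq I) (P : pred I) (G H : I -> {poly F}) :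
  (forall i, P i -> eqN N (G i) (H i)) ->
  eqN N (\sum_(i <- r | P i) G i) (\sum_(i <- r | P i) H i).
Proof.
move=> h j hj; rewrite !coef_sum; apply: eq_bigr => i Pi; exact: h.
Qed.

Lemma eqN_exp N a a' k : eqN N a a' -> eqN N (a ^+ k) (a' ^+ k).
Proof. by move=> h; elim: k => [|k ih]; rewrite ?expr0 // !exprS; apply: eqN_mul. Qed.

Lemma eqN_Xn N : eqN N ('X^N + 1) 1.
Proof. by move=> j hj; rewrite coefD coefXn coef1 (ltn_eqF hj) add0r. Qed.

Lemma X1_mod N m : ('X + 1 : {poly F}) ^+ N = 'X^N + 1 ->
  eqN N (('X + 1) ^+ m) (('X + 1) ^+ (m %% N)).
Proof.
move=> hN; rewrite {1}(divn_eq m N) exprD mulnC exprM hN.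
rewrite -[X in eqN _ _ X]mul1r; apply: eqN_mul => //.
apply: (eqN_trans (b := 1 ^+ (m %/ N))); first by apply: eqN_exp; apply: eqN_Xn.
by rewrite expr1n.
Qed.

Lemma geom_sum (Y : {poly F}) k :
  Y * \sum_(t < k) (Y + 1) ^+ t = (Y + 1) ^+ k - 1.
Proof.
elim: k => [|k ih]; first by rewrite big_ord0 mulr0 expr0 subrr.
by rewrite big_ord_recr /= mulrDr ih exprS; ring.
Qed.

End Gen.



Section GR.
Variable p : nat.
Hypothesis hp : prime p.

Definition phi (N : nat) (f : {ffun 'I_N -> 'F_p}) : {poly 'F_p} :=
  \sum_(i : 'I_N) f i *: ('X + 1) ^+ i.

Lemma frob n : ('X + 1 : {poly 'F_p}) ^+ (p ^ n) = 'X^(p ^ n) + 1.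
Proof.
rewrite exprDn_pchar ?expr1n //.
rewrite pnatX (pnatE _ hp) pchar_poly; by rewrite (pchar_Fp hp).
Qed.

Lemma X1_modp n m : eqN (p ^ n) (('X + 1 : {poly 'F_p}) ^+ m) (('X + 1) ^+ (m %% p ^ n)).
Proof. exact/X1_mod/frob. Qed.

Lemma pn_gt0 n : (0 < p ^ n)%N.
Proof. by rewrite expn_gt0 prime_gt0. Qed.

Lemma phi_tmul n (f g : tLam p n) :
  eqN (p ^ n) (phi (tmul f g)) (phi f * phi g).
Proof.
have E : phi (tmul f g) = \sum_(j : 'I_(p ^ n)) \sum_(k : 'I_(p ^ n))
     (f j * g k) *: ('X + 1) ^+ ((j + k) %% p ^ n).
  rewrite /phi /tmul.
  under eq_bigr => i _ do rewrite ffunE scaler_suml.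
  rewrite exchange_big /=; apply: eq_bigr => j _.
  under eq_bigr => i _ do rewrite scaler_suml.
  rewrite (exchange_big_dep xpredT) //=; apply: eq_bigr => k _.
  rewrite (eq_bigl (pred1 (Ordinal (ltn_pmod (j + k) (pn_gt0 n))))) ?big_pred1_eq //.
rewrite E /phi mulr_suml; apply: eqN_sum => j _.
rewrite mulr_sumr; apply: eqN_sum => k _.
rewrite -scalerAl -scalerAr scalerA -exprD /=.
by apply: eqN_scale; apply: eqN_sym; apply: X1_modp.
Qed.

Lemma phiD N (f g : {ffun 'I_N -> 'F_p}) : phi (f + g) = phi f + phi g.
Proof. by rewrite /phi -big_split; apply: eq_bigr => i _; rewrite ffunE scalerDl. Qed.
Lemma phi0 N : phi (0 : {ffun 'I_N -> 'F_p}) = 0.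
Proof. by rewrite /phi big1 // => i _; rewrite ffunE scale0r. Qed.
Lemma phiN N (f : {ffun 'I_N -> 'F_p}) : phi (- f) = - phi f.
Proof. by rewrite /phi -sumrN; apply: eq_bigr => i _; rewrite ffunE scaleNr. Qed.
Lemma phiB N (f g : {ffun 'I_N -> 'F_p}) : phi (f - g) = phi f - phi g.
Proof. by rewrite phiD phiN. Qed.
Lemma phi_sum N (I : Type) (r : seq I) (P : pred I) (G : I -> {ffun 'I_N -> 'F_p}) :
  phi (\sum_(i <- r | P i) G i) = \sum_(i <- r | P i) phi (G i).
Proof. exact: (big_morph _ (@phiD N) (@phi0 N)). Qed.
Lemma phiZ N c (f : {ffun 'I_N -> 'F_p}) : phi [ffun i => c * f i] = c *: phi f.
Proof. by rewrite /phi scaler_sumr; apply: eq_bigr => i _; rewrite ffunE scalerA. Qed.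

Lemma phi_coef0 N (f : {ffun 'I_N -> 'F_p}) : (phi f)`_0 = \sum_i f i.
Proof.
rewrite /phi coef_sum; apply: eq_bigr => i _.
by rewrite coefZ -horner_coef0 horner_exp hornerD hornerX hornerC add0r expr1n mulr1.
Qed.

Lemma augpow_fwd n k (f : tLam p n) : in_augpow k f ->
  forall j, (j < k)%N -> (j < p ^ n)%N -> (phi f)`_j = 0.
Proof.
elim: k f => [|k ih] f //= [m [xs [ys [hxy ->]]]] j hjk hjN.
rewrite phi_sum coef_sum big1 // => i _.
have [hx hy] := hxy i.
rewrite (phi_tmul (xs i) (ys i) hjN) coefM big1 // => t _.
case: (posnP t) => [->|tpos].
  by rewrite phi_coef0 hx mul0r.
rewrite (ih _ hy) ?mulr0 //.
  by move: hjk tpos (ltn_ord t); move: (t : nat) => tt; lia.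
by apply: leq_ltn_trans hjN; apply: leq_subr.
Qed.

Lemma mod_succ N k : (k < N)%N -> (k.+1 %% N)%N = if k.+1 == N then 0%N else k.+1.
Proof. by move=> hk; case: eqP => [->|h]; [rewrite modnn | rewrite modn_small //; lia]. Qed.

Lemma pred_shift N i k : (k < N)%N -> (i < N)%N ->
  ((1 + k) %% N == i)%N = (k == (if i == 0%N then N.-1 else i.-1)).
Proof.
move=> hk hi; rewrite add1n mod_succ //.
case: (i =P 0%N) => h1; case: (k.+1 =P N) => h2; apply/eqP/eqP; lia.
Qed.

Lemma augpow_bwd n l : (l < p ^ n)%N -> forall f : tLam p n,
  (forall j, (j < l)%N -> (phi f)`_j = 0) -> in_augpow l f.
Proof.
elim: l => [|l ih] hl f hf //=.
have h1 : (1 < p ^ n)%N by lia.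
pose i0 : 'I_(p ^ n) := Ordinal (pn_gt0 n).
pose i1 : 'I_(p ^ n) := Ordinal h1.
pose x : tLam p n := [ffun i : 'I_(p ^ n) =>
  if val i == 1%N then 1 else if val i == 0%N then -1 else 0].
pose y : tLam p n := [ffun i : 'I_(p ^ n) => - \sum_(t : 'I_(p ^ n) | (t <= i)%N) f t].
have hsum : \sum_i f i = 0 by rewrite -phi_coef0 hf.
have hx0 : forall i : 'I_(p ^ n), i != i1 -> i != i0 -> x i = 0.
  move=> i /eqP hi1 /eqP hi0; rewrite ffunE.
  case: eqP => [e|_]; first by case: hi1; apply: val_inj.
  by case: eqP => [e|_] //; case: hi0; apply: val_inj.
have hi10 : i1 != i0 by [].
have hx1 : x i1 = 1 by rewrite ffunE.
have hxo : x i0 = -1 by rewrite ffunE.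
have augx : in_aug x.
  rewrite /in_aug (bigD1 i1) // (bigD1 i0) //= big1 ?hx1 ?hxo ?addr0 ?subrr //.
  by move=> i /andP [hi1 hi0]; rewrite hx0.
have phix : phi x = 'X.
  rewrite /phi (bigD1 i1) // (bigD1 i0) //= big1 ?hx1 ?hxo ?addr0.
    by rewrite scale1r expr1 expr0 scaleN1r addrK.
  by move=> i /andP [hi1 hi0]; rewrite hx0 // scale0r.
have fxy : f = tmul x y.
  apply/ffunP => i; rewrite ffunE (bigD1 i1) // (bigD1 i0) //=.
  rewrite [X in _ + (_ + X)]big1; last first.
    by move=> j /andP [hj1 hj0]; rewrite big1 // => k _; rewrite hx0 // mul0r.
  rewrite addr0 hx1 hxo.
  have hko : ((if val i == 0%N then (p ^ n).-1 else (val i).-1) < p ^ n)%N.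
    by move: (valP i) (pn_gt0 n); case: eqP => _; lia.
  rewrite (eq_bigl (pred1 (Ordinal hko))); last first.
    by move=> k /=; rewrite pred_shift.
  rewrite big_pred1_eq.
  rewrite (eq_bigl (pred1 i)); last by move=> k /=; rewrite add0n modn_small.
  rewrite big_pred1_eq !mul1r !ffunE /= mulN1r opprK.
  case: eqP => hi.
    rewrite (eq_bigl xpredT) ?hsum ?oppr0 ?add0r; last first.
      by move=> t /=; move: (ltn_ord t); lia.
    rewrite (bigD1 i) ?hi //= big1 ?addr0 // => t /andP [ht1 ht2].
    by case/eqP: ht2; apply: val_inj => /=; move: ht1 hi; lia.
  rewrite [X in _ + X](bigD1 i) ?leqnn //=.
  rewrite [X in _ + (_ + X)](eq_bigl (fun t : 'I_(p ^ n) => (t <= (val i).-1)%N)).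
    by rewrite addrCA addNr addr0.
  move=> t /=; apply/andP/idP.
    case => h2 h3; have h4 : (val t != val i) by [].
    by move: h2 h4 => /=; lia.
  move=> h; split; first by move: h; lia.
  by apply/eqP => e; move: h; rewrite e; lia.
exists 1%N, (fun _ => x), (fun _ => y); split.
  move=> _; split => //; apply: ih; first by lia.
  move=> j hj.
  have hfe := phi_tmul x y (_ : (j.+1 < p ^ n)%N).
  rewrite -fxy phix in hfe.
  have := hfe ltac:(lia); rewrite coefXM /= => <-; apply: hf; lia.
by rewrite big_ord1.
Qed.
End GR.



Section Red.
Variable p : nat.
Hypothesis hp : prime p.

Definition r (x : Zpadic p) : 'F_p := (x 1%N)%:~R.

Lemma intr_modp (z : int) : (modz z (zpm p ^ 1)%:Z)%:~R = z%:~R :> 'F_p.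
Proof.
have hm : ((zpm p ^ 1)%:Z)%:~R = 0 :> 'F_p.
  rewrite /zpm expn1 (maxn_idPl (prime_gt1 hp)); exact: (pchar_Fp_0 hp).
set m := ((zpm p ^ 1)%:Z) in hm *.
set w := modz z m.
have -> : z = (z %/ m)%Z * m + w by exact: intdiv.divz_eq.
by rewrite [in RHS]intrD [in RHS]intrM hm mulr0 add0r.
Qed.

Lemma rD x y : r (x + y) = r x + r y.
Proof.
rewrite /r.
change ((x + y) 1%N) with (modz (x 1%N + y 1%N) (zpm p ^ 1)%:Z).
by rewrite intr_modp intrD.
Qed.

Lemma rM x y : r (x * y) = r x * r y.
Proof.
rewrite /r.
change ((x * y) 1%N) with (modz (x 1%N * y 1%N) (zpm p ^ 1)%:Z).
by rewrite intr_modp intrM.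
Qed.

Lemma rN x : r (- x) = - r x.
Proof.
rewrite /r.
change ((- x) 1%N) with (modz (- x 1%N) (zpm p ^ 1)%:Z).
by rewrite intr_modp intrN.
Qed.

Lemma r0 : r 0 = 0.
Proof.
rewrite /r. change ((0 : Zpadic p) 1%N) with (modz 0 (zpm p ^ 1)%:Z).
by rewrite intr_modp.
Qed.

Lemma r1 : r 1 = 1.
Proof.
rewrite /r. change ((1 : Zpadic p) 1%N) with (modz 1 (zpm p ^ 1)%:Z).
by rewrite intr_modp.
Qed.

Lemma rB x y : r (x - y) = r x - r y.
Proof. by rewrite rD rN. Qed.

Lemma r_sum (I : Type) (s : seq I) (P : pred I) (G : I -> Zpadic p) :
  r (\sum_(i <- s | P i) G i) = \sum_(i <- s | P i) r (G i).
Proof. exact: (big_morph _ rD r0). Qed.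

Lemma rn k : r (k%:R) = k%:R.
Proof. by elim: k => [|k ih]; rewrite ?r0 // !mulrS rD r1 ih. Qed.

Lemma rp : r (p%:R) = 0.
Proof. by rewrite rn pchar_Fp_0. Qed.

Lemma r_unit x v : x * v = 1 -> r x != 0.
Proof. by move=> h; apply/eqP => e; move: (congr1 r h); rewrite rM e mul0r r1 => /eqP; rewrite eq_sym oner_eq0. Qed.

End Red.



Section PhiL.
Variable p : nat.
Hypothesis hp : prime p.

Definition Phi n (f : Lam p n) : {poly 'F_p} := phi (lred f).

Lemma lredE n (f : Lam p n) i : lred f i = r (f i).
Proof. by rewrite ffunE. Qed.

Lemma Phi_scale n c (f : Lam p n) : Phi (lscale c f) = r c *: Phi f.
Proof.
rewrite /Phi -phiZ; congr phi; apply/ffunP => i.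
by rewrite !ffunE -rM.
Qed.

Lemma Phi_sub n (f g : Lam p n) : Phi (f - g) = Phi f - Phi g.
Proof.
rewrite /Phi -phiB; congr phi; apply/ffunP => i.
by rewrite !ffunE -rB.
Qed.

Lemma Phi_lpi n (f : Lam p n.+1) : eqN (p ^ n) (Phi (lpi f)) (Phi f).
Proof.
have E : Phi (lpi f) = \sum_(i : 'I_(p ^ n.+1)) r (f i) *: ('X + 1) ^+ (i %% p ^ n).
  rewrite /Phi /phi.
  under eq_bigr => j _ do rewrite lredE ffunE (r_sum hp) scaler_suml.
  rewrite (exchange_big_dep xpredT) //=; apply: eq_bigr => i _.
  rewrite (eq_bigl (pred1 (Ordinal (ltn_pmod i (pn_gt0 hp n))))) ?big_pred1_eq //.
rewrite E /Phi /phi; apply: eqN_sum => i _; rewrite lredE.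
apply: eqN_scale; apply: eqN_sym; exact: X1_modp.
Qed.


Lemma geomX n : \sum_(t < p) ('X^(p ^ n) + 1 : {poly 'F_p}) ^+ t = 'X^(p ^ n.+1 - p ^ n).
Proof.
apply: (@mulfI _ ('X^(p ^ n))); first by rewrite monic_neq0 // monicXn.
rewrite geom_sum exprDn_pchar; last first.
  by rewrite (pnatE _ hp) pchar_poly (pchar_Fp hp).
rewrite expr1n addrK -exprM -exprD subnKC; first by rewrite expnS mulnC.
by rewrite leq_pexp2l ?(prime_gt0 hp).
Qed.

Lemma Phi_lnu n (g : Lam p n) : Phi (lnu g) = Phi g * 'X^(p ^ n.+1 - p ^ n).
Proof.
pose N := (p ^ n)%N.
pose G (i : nat) := r (g (Ordinal (ltn_pmod i (pn_gt0 hp n)))) *: ('X + 1 : {poly 'F_p}) ^+ i.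
have HG : forall i : 'I_(p ^ n.+1), lred (lnu g) i = r (g (Ordinal (ltn_pmod i (pn_gt0 hp n)))).
  move=> i; rewrite lredE ffunE.
  by rewrite (eq_bigl (pred1 (Ordinal (ltn_pmod i (pn_gt0 hp n))))) ?big_pred1_eq.
have E1 : Phi (lnu g) = \sum_(0 <= i < p * N) G i.
  rewrite big_mkord /Phi /phi -expnS; apply: eq_bigr => i _; by rewrite HG.
rewrite E1 big_nat_mul -geomX big_mkord mulr_sumr; apply: eq_bigr => t _.
rewrite -{1}(add0n (t * N)%N) big_addn.
have -> : (t.+1 * N - t * N = N)%N by rewrite mulSn addnK.
rewrite big_mkord /Phi /phi mulr_suml; apply: eq_bigr => j _.
rewrite /G.
have -> : Ordinal (ltn_pmod (j + t * N)%N (pn_gt0 hp n)) = j.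
  by apply: val_inj => /=; rewrite addnC modnMDl modn_small.
by rewrite lredE -scalerAl exprD mulnC exprM frob.
Qed.

End PhiL.



Lemma sum_step (p a m : nat) : (a <= m.+2)%N ->
  \sum_(a <= i < m.+4) (-1) ^+ (m.+3 - i) * (p ^ i)%:Z =
  \sum_(a <= i < m.+2) (-1) ^+ (m.+1 - i) * (p ^ i)%:Z + (p ^ m.+3)%:Z - (p ^ m.+2)%:Z.
Proof.
move=> ha.
rewrite big_nat_recr /=; last by lia.
rewrite big_nat_recr //=.
have -> : (m.+3 - m.+2 = 1)%N by lia.
rewrite subnn expr0 expr1 mul1r mulN1r.
rewrite addrAC; congr (_ + _ - _); apply: eq_big_nat => i /andP [_ hi].
have -> : (m.+3 - i = (m.+1 - i).+2)%N by lia.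
by rewrite !exprS !mulN1r opprK.
Qed.

Lemma qn_rec p n : qn p n.+2 = qn p n + (p ^ n.+1)%:Z - (p ^ n)%:Z.
Proof.
case: n => [|[|m]].
- rewrite /qn /= big_nat_recr // big_nat_recr // big_geq // /= expn0 expn1; ring.
- rewrite /qn /= big_nat_recr // big_nat_recr // big_geq // /= expn1; ring.
- rewrite /qn /=. case: (odd m) => /=; rewrite sum_step //.
Qed.

Section Main.
Variables (p : nat) (p_prime : prime p) (a u : Zpadic p) (P : forall n : nat, Lam p n).
Hypotheses (a_in_pZp : exists b : Zpadic p, a = p%:R * b)
  (u_unit : exists v : Zpadic p, u * v = 1)
  (P0_unit : forall i : 'I_(p ^ 0), exists v : Zpadic p, P 0%N i * v = 1)
  (P1 : lpi (P 1%N) = lscale u (P 0%N))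
  (Prec : forall n : nat, lpi (P n.+2) = lscale a (P n.+1) - lnu (P n)).

Definition Inv n := exists l : nat, l%:Z = qn p n /\ (l < p ^ n)%N /\
  (forall j, (j < l)%N -> (Phi (P n))`_j = 0) /\ (Phi (P n))`_l != 0.

Lemma inv0 : Inv 0.
Proof.
exists 0%N; split => //; split; first exact: pn_gt0.
split => // ; rewrite /Phi phi_coef0.
pose i0 : 'I_(p ^ 0) := Ordinal (pn_gt0 p_prime 0).
have all_eq : forall i : 'I_(p ^ 0), i = i0.
  by case=> k hk; apply: val_inj => /=; move: hk; rewrite expn0; lia.
rewrite (bigD1 i0) //= big1 ?addr0; last first.
  by move=> i /eqP hi; case: hi; exact: all_eq.
have [v hv] := P0_unit i0.
by rewrite lredE (r_unit p_prime hv).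
Qed.

Lemma inv1 : Inv 1.
Proof.
exists 0%N; split => //; split; first exact: pn_gt0.
split => //.
rewrite -(Phi_lpi p_prime (P 1%N) (pn_gt0 p_prime 0)) P1 Phi_scale // coefZ.
have [v hv] := u_unit.
rewrite mulf_neq0 ?(r_unit p_prime hv) //.
have [l [_ [hl [hz hnz]]]] := inv0.
have e : l = 0%N by move: hl; rewrite expn0; lia.
by move: hnz; rewrite e.
Qed.

Lemma inv_step n : Inv n -> Inv n.+2.
Proof.
move=> [l [hq [hl [hz hnz]]]].
have hle : (p ^ n <= p ^ n.+1)%N by rewrite leq_pexp2l ?(prime_gt0 p_prime).
have hlt : (p ^ n.+1 < p ^ n.+2)%N by rewrite ltn_exp2l ?(prime_gt1 p_prime).
pose D := (p ^ n.+1 - p ^ n)%N.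
have hra : r a = 0.
  by have [b ->] := a_in_pZp; rewrite (rM p_prime) (rp p_prime) mul0r.
have key : forall j, (j < p ^ n.+1)%N ->
    (Phi (P n.+2))`_j = - (if (j < D)%N then 0 else (Phi (P n))`_(j - D)).
  move=> j hj.
  rewrite -(Phi_lpi p_prime (P n.+2) hj) Prec (Phi_sub p_prime) Phi_scale // hra.
  by rewrite scale0r sub0r coefN Phi_lnu // coefMXn.
exists (l + D)%N; split.
  rewrite qn_rec -hq /D; lia.
split; first by rewrite /D; lia.
split.
  move=> j hj; rewrite key; last by rewrite /D in hj *; lia.
  case: ifP => hjD; first by rewrite oppr0.
  rewrite hz ?oppr0 //; move: hjD hj; rewrite /D; lia.
rewrite key; last by rewrite /D; lia.
rewrite ifF; last by rewrite /D; lia.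
by rewrite addnK oppr_eq0.
Qed.

Lemma inv_all n : Inv n.
Proof.
suff : Inv n /\ Inv n.+1 by case.
elim: n => [|n [ih1 ih2]]; first by split; [exact: inv0 | exact: inv1].
by split => //; exact: inv_step.
Qed.

End Main.

Theorem lemma5p1 (p : nat) (p_prime : prime p) (p_odd : odd p)
  (a u : Zpadic p) (P : forall n : nat, Lam p n)
  (a_in_pZp : exists b : Zpadic p, a = p%:R * b)
  (u_unit : exists v : Zpadic p, u * v = 1)
  (P0_unit : forall i : 'I_(p ^ 0), exists v : Zpadic p, P 0%N i * v = 1)
  (P1 : lpi (P 1%N) = lscale u (P 0%N))
  (Prec : forall n : nat,
     lpi (P n.+2) = lscale a (P n.+1) - lnu (P n)) :
  forall n : nat,
    P n != 0 /\ is_mu (P n) 0 /\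
    exists l : nat, l%:Z = qn p n /\ is_lambda (P n) l.
Proof.
move=> n.
have [l [hq [hl [hz hnz]]]] := inv_all p_prime a_in_pZp u_unit P0_unit P1 Prec n.
have sc1 : lscale (p%:R ^+ 0) (P n) = P n.
  by apply/ffunP => i; rewrite ffunE expr0 mul1r.
have nmu : ~ (exists g : Lam p n, P n = lscale (p%:R ^+ 1) g).
  move=> [g hg]; move/eqP: hnz; apply.
  by rewrite hg Phi_scale // expr1 (rp p_prime) scale0r coef0.
have mu0 : is_mu (P n) 0 by split => //; exists (P n).
split.
  apply/eqP => e; move/eqP: hnz; apply.
  have -> : Phi (P n) = 0.
    rewrite /Phi /phi big1 // => i _.
    by rewrite lredE e ffunE (r0 p_prime) scale0r.
  by rewrite coef0.
split => //.
exists l; split => //.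
exists 0%N, (P n); split => //; split => //; split.
  apply: augpow_bwd => //.
move=> h; have := augpow_fwd p_prime h (ltnSn l) hl.
by move/eqP: hnz.
Qed.
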